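(* The group $\mathbb{G}=\mathrm{Aut}(\mathbf{R},<)$ is split.
   Context: $\mathbb{G}$ is the group of order-preserving bijections of $\mathbf{R}$, topologized so that pointwise stabilizers of finite subsets of $\mathbf{R}$ form a neighborhood basis of the identity; it is a pro-oligomorphic group. A pro-oligomorphic group $G$ is split if for every pro-oligomorphic group $H$ (Hausdorff, open subgroups form a neighborhood basis of $1$, $U\backslash H/V$ finite for open $U,V$), every transitive $(G\times H)$-set (action with open stabilizers) is isomorphic to $X\times Y$ for a transitive $G$-set $X$ and a transitive $H$-set $Y$. *)

(* Defs.v *)
From HB Require Import structures.
From Stdlib Require Import Reals.
From mathcomp Require Import all_boot all_order all_algebra.
From mathcomp Require Import all_classical all_reals all_analysis.

Set Implicit Arguments.
Unset Strict Implicit.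
Unset Printing Implicit Defensive.
Local Open Scope classical_set_scope.

Definition is_topgroup (H : topologicalType) (mul : H -> H -> H)
    (inv : H -> H) (one : H) : Prop :=
  [/\ (forall a b c, mul a (mul b c) = mul (mul a b) c),
      (forall a, mul one a = a /\ mul a one = a),
      (forall a, mul (inv a) a = one /\ mul a (inv a) = one),
      continuous (fun p : H * H => mul p.1 p.2) &
      continuous inv].

Definition is_subgroup (H : Type) (mul : H -> H -> H) (inv : H -> H) (one : H)
    (U : set H) : Prop :=
  [/\ U one, (forall a b, U a -> U b -> U (mul a b)) & (forall a, U a -> U (inv a))].

Definition open_subgroup (H : topologicalType) (mul : H -> H -> H)
    (inv : H -> H) (one : H) (U : set H) : Prop :=
  is_subgroup mul inv one U /\ open U.

Definition double_coset (H : Type) (mul : H -> H -> H) (U V : set H) (h : H) : set H :=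
  [set z | exists2 u, U u & exists2 v, V v & z = mul (mul u h) v].

Definition pro_oligomorphic (H : topologicalType) (mul : H -> H -> H)
    (inv : H -> H) (one : H) : Prop :=
  [/\ is_topgroup mul inv one,
      hausdorff_space H,
      (forall N, nbhs one N -> exists2 U, open_subgroup mul inv one U & U `<=` N) &
      (forall U V, open_subgroup mul inv one U -> open_subgroup mul inv one V ->
         finite_set [set D | exists h, D = double_coset mul U V h])].

Definition transitive_Kset (K : topologicalType) (mul : K -> K -> K) (one : K)
    (X : Type) (act : K -> X -> X) : Prop :=
  [/\ (forall x, act one x = x),
      (forall a b x, act (mul a b) x = act a (act b x)),
      (forall x, open [set k | act k x = x]),
      (exists x : X, True) &
      (forall x y, exists k, act k x = y)].

Definition prod_mul (K1 K2 : Type) (m1 : K1 -> K1 -> K1) (m2 : K2 -> K2 -> K2)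
    (a b : K1 * K2) : K1 * K2 := (m1 a.1 b.1, m2 a.2 b.2).

Definition is_split (G : topologicalType) (mulG : G -> G -> G) (oneG : G) : Prop :=
  forall (H : topologicalType) (mulH : H -> H -> H) (invH : H -> H) (oneH : H),
    pro_oligomorphic mulH invH oneH ->
  forall (Z : Type) (act : G * H -> Z -> Z),
    transitive_Kset (prod_mul mulG mulH) (oneG, oneH) act ->
  exists (X : Type) (actX : G -> X -> X) (Y : Type) (actY : H -> Y -> Y),
    [/\ transitive_Kset mulG oneG actX,
        transitive_Kset mulH oneH actY &
        exists phi : Z -> X * Y, bijective phi /\
          forall g h z, phi (act (g, h) z) = (actX g (phi z).1, actY h (phi z).2)].

Definition autR := {f : R -> R |
  bijective f /\ forall x y, Rlt x y <-> Rlt (f x) (f y)}.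

HB.instance Definition _ := gen_eqMixin autR.
HB.instance Definition _ := gen_choiceMixin autR.

Definition autR_fun (g : autR) : R -> R := proj1_sig g.

Definition pstab (F : set R) : set autR :=
  [set h | forall x, F x -> autR_fun h x = x].

Lemma autR_comp_subproof (f g : autR) :
  bijective (autR_fun f \o autR_fun g) /\
  forall x y, Rlt x y <-> Rlt ((autR_fun f \o autR_fun g) x) ((autR_fun f \o autR_fun g) y).
Proof.
case: f => f [bf mf]; case: g => g [bg mg]; split.
  exact: bij_comp.
by move=> x y /=; rewrite (mg x y) (mf (g x) (g y)).
Qed.

Definition autR_mul (f g : autR) : autR := exist _ _ (autR_comp_subproof f g).

Lemma autR_one_subproof : bijective (@id R) /\ forall x y, Rlt x y <-> Rlt (id x) (id y).
Proof. by split=> //; exists id. Qed.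

Definition autR_one : autR := exist _ _ autR_one_subproof.

Definition autR_open : set_system autR :=
  [set A | forall g, A g ->
     exists2 F : set R, finite_set F & forall h, pstab F h -> A (autR_mul g h)].

Lemma autR_openT : autR_open setT.
Proof. by move=> g _; exists set0 => //; exact: finite_set0. Qed.

Lemma autR_openI : setI_closed autR_open.
Proof.
move=> A B oA oB g [Ag Bg].
have [F1 fF1 h1] := oA g Ag; have [F2 fF2 h2] := oB g Bg.
exists (F1 `|` F2); first by rewrite finite_setU.
move=> h hF; split; [apply: h1 | apply: h2]; move=> x Fx; apply: hF; [left|right]; exact: Fx.
Qed.

Lemma autR_open_bigU (I : Type) (f : I -> set autR) :
  (forall i, autR_open (f i)) -> autR_open (\bigcup_i f i).
Proof.
move=> ofi g [i _ fig]; have [F fF hF] := ofi i g fig.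
by exists F => // h /hF fh; exists i.
Qed.

HB.instance Definition _ := isOpenTopological.Build autR
  autR_openT autR_openI autR_open_bigU.

(* Main.v *)
Require Import Defs.
From HB Require Import structures.
From Stdlib Require Import Reals.
From mathcomp Require Import all_boot all_order all_algebra.
From mathcomp Require Import all_classical all_reals all_analysis.
From mathcomp Require Import Rstruct.
From Stdlib Require Import Lra Lia.
From mathcomp Require Import zify.
Set Implicit Arguments.
Unset Strict Implicit.
Unset Printing Implicit Defensive.
Local Open Scope R_scope.

Definition lin (p q p' q' t : R) : R := p' + (t - p) * ((q' - p') / (q - p)).

Lemma lin_pos p q p' q' : p < q -> p' < q' -> 0 < (q' - p') / (q - p).
Proof. move=> h1 h2; apply: Rdiv_lt_0_compat; lra. Qed.

Lemma lin_mono p q p' q' t1 t2 : p < q -> p' < q' -> t1 < t2 ->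
  lin p q p' q' t1 < lin p q p' q' t2.
Proof.
move=> h1 h2 h3; have hk := lin_pos h1 h2; rewrite /lin.
set k := (q' - p') / (q - p) in hk *.
have : 0 < (t2 - t1) * k by apply: Rmult_lt_0_compat; lra.
nra.
Qed.

Lemma lin_p p q p' q' : p < q -> lin p q p' q' p = p'.
Proof. move=> h; rewrite /lin; field; lra. Qed.

Lemma lin_q p q p' q' : p < q -> lin p q p' q' q = q'.
Proof. move=> h; rewrite /lin; field; lra. Qed.

Lemma lin_range p q p' q' t : p < q -> p' < q' -> p <= t <= q ->
  p' <= lin p q p' q' t <= q'.
Proof.
move=> h1 h2 [h3 h4].
have e1 := @lin_p p q p' q' h1; have e2 := @lin_q p q p' q' h1.
split.
  case: (Req_dec t p) => [->|ne]; first lra.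
  have := @lin_mono p q p' q' p t h1 h2; lra.
case: (Req_dec t q) => [->|ne]; first lra.
have := @lin_mono p q p' q' t q h1 h2; lra.
Qed.

Lemma lin_inv p q p' q' t : p < q -> p' < q' ->
  lin p q p' q' (lin p' q' p q t) = t.
Proof. move=> h1 h2; rewrite /lin; field; lra. Qed.

Definition bumpf (u v x y t : R) : R :=
  if Rle_dec t u then t else if Rle_dec t x then lin u x u y t
  else if Rle_dec t v then lin x v y v t else t.


Lemma bump_out u v x y t : u < x < v -> u < y < v -> (t <= u \/ v <= t) ->
  bumpf u v x y t = t.
Proof.
move=> hx hy ht; rewrite /bumpf.
case: Rle_dec => // h1; case: Rle_dec => h2; first lra.
case: Rle_dec => // h3.
have e : t = v by lra.
subst t; by rewrite lin_q //; lra.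
Qed.

Lemma bump_l u v x y t : u < x < v -> u < y < v -> u <= t <= x ->
  bumpf u v x y t = lin u x u y t.
Proof.
move=> hx hy ht; rewrite /bumpf.
case: Rle_dec => h1.
  have e : t = u by lra.
  subst t; by rewrite lin_p //; lra.
by case: Rle_dec => // h2; lra.
Qed.

Lemma bump_r u v x y t : u < x < v -> u < y < v -> x <= t <= v ->
  bumpf u v x y t = lin x v y v t.
Proof.
move=> hx hy ht; rewrite /bumpf.
case: Rle_dec => h1; first lra.
case: Rle_dec => h2.
  have e : t = x by lra.
  subst t; by rewrite lin_q ?lin_p //; lra.
by case: Rle_dec => // h3; lra.
Qed.

Definition smono_on (P : R -> Prop) (f : R -> R) :=
  forall t1 t2, P t1 -> P t2 -> t1 < t2 -> f t1 < f t2.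

Lemma smono_glue (P Q S : R -> Prop) f b :
  smono_on P f -> smono_on Q f -> P b -> Q b ->
  (forall t, S t -> t <= b -> P t) -> (forall t, S t -> b <= t -> Q t) ->
  smono_on S f.
Proof.
move=> hP hQ Pb Qb hSP hSQ t1 t2 s1 s2 lt12.
case: (Rle_dec t2 b) => h2.
  by apply: hP => //; [apply: hSP => //; lra| apply: hSP].
case: (Rle_dec b t1) => h1.
  by apply: hQ => //; [apply: hSQ| apply: hSQ => //; lra].
have a1 : f t1 < f b by apply: hP => //; [apply: hSP => //; lra| lra].
have a2 : f b < f t2 by apply: hQ => //; [apply: hSQ => //; lra| lra].
lra.
Qed.

Lemma bump_mono u v x y : u < x < v -> u < y < v ->
  forall t1 t2, t1 < t2 -> bumpf u v x y t1 < bumpf u v x y t2.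
Proof.
move=> hx hy.
have m0 : smono_on (fun t => t <= u) (bumpf u v x y).
  by move=> t1 t2 h1 h2 h; rewrite !bump_out //; tauto.
have m3 : smono_on (fun t => v <= t) (bumpf u v x y).
  by move=> t1 t2 h1 h2 h; rewrite !bump_out //; tauto.
have m1 : smono_on (fun t => u <= t <= x) (bumpf u v x y).
  move=> t1 t2 h1 h2 h; rewrite !bump_l //; apply: lin_mono => //; lra.
have m2 : smono_on (fun t => x <= t <= v) (bumpf u v x y).
  move=> t1 t2 h1 h2 h; rewrite !bump_r //; apply: lin_mono => //; lra.
have m01 : smono_on (fun t => t <= x) (bumpf u v x y).
  by apply: (smono_glue m0 m1 (b:=u)); move=> /= *; lra.
have m23 : smono_on (fun t => x <= t) (bumpf u v x y).
  by apply: (smono_glue m2 m3 (b:=v)); move=> /= *; lra.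
have := smono_glue (S := fun _ => True) m01 m23 (b:=x).
move=> H t1 t2 h; apply: H => //; lra.
Qed.

Lemma bump_rinv u v x y s : u < x < v -> u < y < v ->
  bumpf u v x y (bumpf u v y x s) = s.
Proof.
move=> hx hy.
case: (Rle_dec s u) => h1.
  have e1 : bumpf u v y x s = s by apply: bump_out => //; left.
  by rewrite e1; apply: bump_out => //; left.
case: (Rle_dec v s) => h2.
  have e1 : bumpf u v y x s = s by apply: bump_out => //; right.
  by rewrite e1; apply: bump_out => //; right.
case: (Rle_dec s y) => h3.
  rewrite (bump_l hy hx); last lra.
  have := @lin_range u y u x s; move=> /(_ ltac:(lra) ltac:(lra) ltac:(lra)) hr.
  rewrite (bump_l hx hy) //.
  by rewrite lin_inv //; lra.
rewrite (bump_r hy hx); last lra.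
have := @lin_range y v x v s; move=> /(_ ltac:(lra) ltac:(lra) ltac:(lra)) hr.
rewrite (bump_r hx hy) //.
by rewrite lin_inv //; lra.
Qed.

Lemma autR_ext (f g : autR) : (forall t, autR_fun f t = autR_fun g t) -> f = g.
Proof.
case: f => f pf; case: g => g pg /= e.
have efg : f = g by apply: funext.
subst g; congr exist; exact: Prop_irrelevance.
Qed.

Lemma autR_mono (g : autR) a b : a < b -> autR_fun g a < autR_fun g b.
Proof. by case: g => g [_ m] /=; move/m. Qed.

Lemma autR_inj (g : autR) a b : autR_fun g a = autR_fun g b -> a = b.
Proof.
move=> e; case: (Rtotal_order a b) => [h|[//|h]].
  by have := autR_mono g h; lra.
by have := autR_mono g h; lra.
Qed.

Lemma mk_autR_subproof (f finv : R -> R) :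
  (forall a b, a < b -> f a < f b) -> (forall y, f (finv y) = y) ->
  bijective f /\ forall x y, Rlt x y <-> Rlt (f x) (f y).
Proof.
move=> m r.
have inj : forall a b, f a = f b -> a = b.
  move=> a b e; case: (Rtotal_order a b) => [h|[//|h]].
    by have := m _ _ h; lra.
  by have := m _ _ h; lra.
split.
  exists finv => // x; apply: inj; by rewrite r.
move=> x y; split; first exact: m.
move=> h; case: (Rtotal_order x y) => [//|[e|h2]].
  subst; lra.
by have := m _ _ h2; lra.
Qed.

Definition mk_autR (f finv : R -> R) m r : autR :=
  exist _ f (@mk_autR_subproof f finv m r).

Lemma autR_inv_ex (g : autR) : exists ginv : R -> R,
  (forall t, autR_fun g (ginv t) = t) /\ (forall t, ginv (autR_fun g t) = t).
Proof.
case: g => g [[gi c1 c2] _] /=; exists gi; split => t; [exact: c2 | exact: c1].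
Qed.

Definition autR_invf (g : autR) : R -> R := proj1_sig (cid (autR_inv_ex g)).

Lemma autR_invfK (g : autR) t : autR_fun g (autR_invf g t) = t.
Proof. rewrite /autR_invf; case: cid => gi [h1 h2] /=; exact: h1. Qed.

Lemma autR_invfK' (g : autR) t : autR_invf g (autR_fun g t) = t.
Proof. rewrite /autR_invf; case: cid => gi [h1 h2] /=; exact: h2. Qed.

Lemma autR_invf_mono (g : autR) a b : a < b -> autR_invf g a < autR_invf g b.
Proof.
move=> h; have [_ mg] := proj2_sig g; apply/mg.
change (autR_fun g (autR_invf g a) < autR_fun g (autR_invf g b)).
by rewrite !autR_invfK.
Qed.

Definition autR_inv (g : autR) : autR :=
  mk_autR (@autR_invf_mono g) (autR_invfK' g).

Lemma autR_mulV (g : autR) : autR_mul (autR_inv g) g = autR_one.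
Proof. apply: autR_ext => t /=; exact: autR_invfK'. Qed.

Lemma autR_mulVr (g : autR) : autR_mul g (autR_inv g) = autR_one.
Proof. apply: autR_ext => t /=; exact: autR_invfK. Qed.

Lemma autR_mul1 (g : autR) : autR_mul g autR_one = g.
Proof. by apply: autR_ext. Qed.

Lemma autR_1mul (g : autR) : autR_mul autR_one g = g.
Proof. by apply: autR_ext. Qed.

Lemma autR_mulA (f g h : autR) : autR_mul f (autR_mul g h) = autR_mul (autR_mul f g) h.
Proof. by apply: autR_ext. Qed.

Definition bump (u v x y : R) (hx : u < x < v) (hy : u < y < v) : autR :=
  @mk_autR (bumpf u v x y) (bumpf u v y x) (@bump_mono u v x y hx hy) (fun s => @bump_rinv u v x y s hx hy).

Local Open Scope classical_set_scope.

Definition pstabL (s : seq R) : set autR := pstab [set` s].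

Definition subgrp (K : set autR) :=
  (forall a b, K a -> K b -> K (autR_mul a b)) /\ (forall a, K a -> K (autR_inv a)).

Lemma abs_out (x a e : R) : e < Rabs (x - a) -> x <= a - e \/ a + e <= x.
Proof. rewrite /Rabs; case: Rcase_abs => h0 h; lra. Qed.

Lemma abs_pos (x a : R) : x <> a -> 0 < Rabs (x - a).
Proof. move=> h; apply: Rabs_pos_lt; lra. Qed.

Lemma eps_ex (s : seq R) (d : R -> R) :
  (forall x, x \in s -> 0 < d x) -> exists e, 0 < e /\ forall x, x \in s -> e < d x.
Proof.
elim: s => [|y s IH] H.
  by exists 1; split => //; lra.
have [e [e0 he]] : exists e, 0 < e /\ forall x, x \in s -> e < d x.
  by apply: IH => x xs; apply: H; rewrite in_cons xs orbT.
have dy : 0 < d y by apply: H; rewrite in_cons eqxx.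
exists (Rmin e (d y / 2)); split.
  by apply: Rmin_pos => //; lra.
move=> x; rewrite in_cons => /orP [/eqP ->|xs].
  have := Rmin_r e (d y / 2); lra.
have := Rmin_l e (d y / 2); have := he x xs; lra.
Qed.

Lemma finish_lemma (K : set autR) (A B : seq R) (a e : R) (f q : autR) :
  subgrp K -> pstabL A `<=` K -> pstabL B `<=` K -> 0 < e ->
  (forall x, x \in B -> e < Rabs (x - a)) ->
  (forall x, x \in A -> x <> a -> e < Rabs (x - a)) ->
  (forall x, x \in A -> x <> a -> autR_fun f x = x) ->
  K q -> (forall x, x \in A -> x <> a -> autR_fun q x = x) ->
  Rabs (autR_fun q (autR_fun f a) - a) < e -> a \in A -> K f.
Proof.
move=> [Km Ki] hA hB e0 eB eA fA Kq qA qc aA.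
set w := autR_fun q (autR_fun f a) in qc.
have hw : a - e < w < a + e by move: qc; rewrite /Rabs; case: Rcase_abs => h0 h; lra.
have h1 : a - e < w < a + e by [].
have h2 : a - e < a < a + e by lra.
pose p := bump h1 h2.
have pout : forall x, x <= a - e \/ a + e <= x -> autR_fun p x = x.
  by move=> x hx; rewrite /= bump_out.
have Kp : K p.
  by apply: hB => x /= xB; apply: pout; apply: abs_out; exact: eB.
have pw : autR_fun p w = a.
  by rewrite /= bump_l ?lin_q //; lra.
pose h := autR_mul p (autR_mul q f).
have Kh : K h.
  apply: hA => x /= xA.
  case: (Req_dec x a) => [->|xa].
    exact: pw.
  rewrite fA // qA //; apply: pout; apply: abs_out; exact: eA.
have ef : autR_mul (autR_inv q) (autR_mul (autR_inv p) h) = f.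
  by apply: autR_ext => t /=; rewrite !autR_invfK'.
rewrite -ef.
apply: (Km); first exact: (Ki).
apply: (Km) => //; exact: (Ki).
Qed.

Lemma remove_one (K : set autR) (A B : seq R) (a : R) :
  subgrp K -> pstabL A `<=` K -> pstabL B `<=` K -> a \in A -> a \notin B ->
  pstabL [seq x <- A | x != a] `<=` K.
Proof.
move=> sK hA hB aA aB f /= fA'.
have fA : forall x, x \in A -> x <> a -> autR_fun f x = x.
  move=> x xA xa; apply: fA' => /=; rewrite mem_filter xA andbT; exact/eqP.
set c := autR_fun f a.
have ord : forall x, x \in A -> x <> a -> (x < a <-> x < c).
  move=> x xA xa; have [_ mf] := proj2_sig f.
  rewrite (mf x a); change (autR_fun f x < autR_fun f a <-> x < c).
  by rewrite fA.
have nc : forall x, x \in A -> x <> a -> x <> c.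
  move=> x xA xa xc; apply: (xa); apply: (@autR_inj f); rewrite fA //; exact: xc.
have [e1 [e10 he1]] : exists e, 0 < e /\ forall x, x \in B -> e < Rabs (x - a).
  apply: eps_ex => y yB; apply: abs_pos => ya; rewrite -ya yB in aB; done.
have [e2 [e20 he2]] : exists e, 0 < e /\ forall x, x \in [seq y <- A | y != a] ->
    e < Rmin (Rabs (x - a)) (Rabs (x - c)).
  apply: eps_ex => y; rewrite mem_filter => /andP [/eqP ya yA].
  apply: Rmin_pos; apply: abs_pos => //; exact: nc.
pose e := Rmin e1 e2.
have e0 : 0 < e by apply: Rmin_pos.
have eB : forall x, x \in B -> e < Rabs (x - a).
  by move=> x xB; have := he1 x xB; have := Rmin_l e1 e2; rewrite -/e; lra.
have eA2 : forall x, x \in A -> x <> a -> e < Rabs (x - a) /\ e < Rabs (x - c).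
  move=> x xA xa.
  have := he2 x; rewrite mem_filter xA andbT => /(_ (introN eqP xa)) hx.
  have := Rmin_r e1 e2; have := Rmin_l (Rabs (x - a)) (Rabs (x - c));
  have := Rmin_r (Rabs (x - a)) (Rabs (x - c)); rewrite -/e; lra.
have eA : forall x, x \in A -> x <> a -> e < Rabs (x - a).
  by move=> x xA xa; case: (eA2 x xA xa).
case: (Rtotal_order a c) => [ac|[ac|ca]].
-
  have h1 : a < c < c + e by lra.
  have h2 : a < a + e / 2 < c + e by lra.
  pose q := bump h1 h2.
  have qA : forall x, x \in A -> x <> a -> autR_fun q x = x.
    move=> x xA xa; rewrite /= bump_out //.
    case: (Rtotal_order x a) => [xl|[//|xg]]; first by left; lra.
    right; have xc : c < x.
      have nxc : ~ x < c by move=> h; have := proj2 (ord x xA xa) h; lra.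
      have := nc x xA xa; lra.
    have := abs_out (proj2 (eA2 x xA xa)); lra.
  have Kq : K q.
    apply: (hA q) => x /= xA; case: (Req_dec x a) => [->|xa].
      by rewrite bump_out //; left; lra.
    exact: qA.
  apply: (finish_lemma sK hA hB e0 eB eA fA Kq qA) => //.
  rewrite /= -/c bump_l ?lin_q; try lra.
  rewrite Rabs_right; lra.
-
  apply: hA => x /= xA; case: (Req_dec x a) => [->|xa]; first by rewrite -/c -ac.
  exact: fA.
-
  have h1 : c - e < c < a by lra.
  have h2 : c - e < a - e / 2 < a by lra.
  pose q := bump h1 h2.
  have qA : forall x, x \in A -> x <> a -> autR_fun q x = x.
    move=> x xA xa; rewrite /= bump_out //.
    case: (Rtotal_order x a) => [xl|[//|xg]]; last by right; lra.
    left; have xc : x < c by apply: (proj1 (ord x xA xa)).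
    have := abs_out (proj2 (eA2 x xA xa)); lra.
  have Kq : K q.
    apply: (hA q) => x /= xA; case: (Req_dec x a) => [->|xa].
      by rewrite bump_out //; right; lra.
    exact: qA.
  apply: (finish_lemma sK hA hB e0 eB eA fA Kq qA) => //.
  rewrite /= -/c bump_r ?lin_p; try lra.
  rewrite Rabs_left; lra.
Qed.

Lemma ex_max (s : seq R) (P : R -> Prop) :
  (exists a, a \in s /\ P a) ->
  exists a, [/\ a \in s, P a & forall b, b \in s -> P b -> b <= a].
Proof.
elim: s => [|y s IH] [a [as_ Pa]]; first by rewrite in_nil in as_.
case: (EM (exists a, a \in s /\ P a)) => [ex|nex].
  have [m [ms Pm hm]] := IH ex.
  case: (EM (P y /\ m < y)) => [[Py my]|nh].
    exists y; split => //; first by rewrite in_cons eqxx.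
    move=> b; rewrite in_cons => /orP [/eqP ->|bs] Pb; first lra.
    by have := hm b bs Pb; lra.
  exists m; split => //; first by rewrite in_cons ms orbT.
  move=> b; rewrite in_cons => /orP [/eqP ->|bs] Pb; last exact: hm.
  by case: (Rle_dec y m) => // h; exfalso; apply: nh; split => //; lra.
have Py : P y.
  move: as_; rewrite in_cons => /orP [/eqP <-|as_] //.
  by exfalso; apply: nex; exists a.
exists y; split => //; first by rewrite in_cons eqxx.
move=> b; rewrite in_cons => /orP [/eqP ->|bs] Pb; first lra.
by exfalso; apply: nex; exists b.
Qed.

Lemma ex_min (s : seq R) (P : R -> Prop) :
  (exists a, a \in s /\ P a) ->
  exists a, [/\ a \in s, P a & forall b, b \in s -> P b -> a <= b].
Proof.
move=> [a [as_ Pa]].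
have hP : (fun x => P (Ropp x)) (Ropp a) by rewrite /= Ropp_involutive.
have [m [ms Pm hm]] := @ex_max [seq Ropp x | x <- s] (fun x => P (Ropp x))
  (ex_intro _ (Ropp a) (conj (map_f _ as_) hP)).
move: ms => /mapP [m' m's em]; subst m.
exists m'; split => //; first by rewrite Ropp_involutive in Pm.
move=> b bs Pb; have := hm (Ropp b) (map_f _ bs); rewrite Ropp_involutive => /(_ Pb).
lra.
Qed.

Lemma fix_lemma (s : seq R) (f : R -> R) :
  (forall a b, a < b -> f a < f b) -> (forall a, a \in s -> f a \in s) ->
  forall a, a \in s -> f a = a.
Proof.
move=> mf fs a as_.
case: (Rtotal_order (f a) a) => [lt|[//|gt]].
  have [m [ms Pm hm]] := @ex_min s (fun x => f x < x) (ex_intro _ a (conj as_ lt)).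
  have := hm (f m) (fs m ms) (mf _ _ Pm); lra.
have [m [ms Pm hm]] := @ex_max s (fun x => x < f x) (ex_intro _ a (conj as_ gt)).
have := hm (f m) (fs m ms) (mf _ _ Pm); lra.
Qed.

Lemma key_lemma (K : set autR) (g : autR) (s : seq R) :
  subgrp K -> pstabL s `<=` K ->
  (forall k, K k -> K (autR_mul g (autR_mul k (autR_inv g)))) -> K g.
Proof.
move=> sK hs hn.
suff : forall n s, (size s <= n)%N -> pstabL s `<=` K -> K g.
  by move=> /(_ (size s) s (leqnn _) hs).
elim=> [|n IH] {hs}s.
  rewrite leqn0 => /nilP -> h0; apply: h0 => x /=; by rewrite in_nil.
move=> sz hs.
case: (EM (exists a, a \in s /\ a \notin map (autR_fun g) s)) => [[a [as_ ag]]|nex].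
  have hgs : pstabL (map (autR_fun g) s) `<=` K.
    move=> p /= hp.
    pose k := autR_mul (autR_inv g) (autR_mul p g).
    have Kk : K k.
      apply: (hs k) => x /= xs; rewrite hp ?autR_invfK' //.
      exact: map_f.
    have := hn k Kk.
    have -> : autR_mul g (autR_mul k (autR_inv g)) = p.
      by apply: autR_ext => t /=; rewrite !autR_invfK.
    done.
  have hrem := remove_one sK hs hgs as_ ag.
  apply: (IH _ _ hrem).
  rewrite size_filter.
  have e := count_predC (fun x => x != a) s.
  have : (0 < count (predC (fun x => x != a)) s)%N.
    rewrite -has_count; apply/hasP; exists a => //=; by rewrite negbK.
  move: sz; rewrite -e.
  move: (count (fun x => x != a) s) (count (predC (fun x => x != a)) s) => c1 c2.
  move=> h1 h2.
  lia.
apply: (hs g) => x /= xs.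
have hf : forall a, a \in s -> autR_invf g a \in s.
  move=> b bs.
  have : b \in map (autR_fun g) s.
    by case: (boolP (b \in map (autR_fun g) s)) => // nb; exfalso; apply: nex; exists b.
  by case/mapP => y ys ->; rewrite autR_invfK'.
have := fix_lemma (@autR_invf_mono g) hf xs.
move=> e; rewrite -{1}e autR_invfK //.
Qed.

Definition Orb (Z B : Type) (be : B -> Z -> Z) (z : Z) : set Z :=
  [set w | exists b, w = be b z].
Definition Xt (Z B : Type) (be : B -> Z -> Z) := {S : set Z | exists z, S = Orb be z}.
Definition toX (Z B : Type) (be : B -> Z -> Z) (z : Z) : Xt be :=
  exist _ (Orb be z) (ex_intro _ z erefl).
Definition rep (Z B : Type) (be : B -> Z -> Z) (S : Xt be) : Z :=
  proj1_sig (cid (proj2_sig S)).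
Definition actXt (Z A B : Type) (al : A -> Z -> Z) (be : B -> Z -> Z) (a : A)
  (S : Xt be) : Xt be := toX be (al a (rep S)).

Arguments actXt {Z A B} al be a S.
Arguments toX {Z B} be z.
Arguments Orb {Z B} be z.

Definition good_beta (Z B : Type) (be : B -> Z -> Z) :=
  [/\ (exists b, forall z, be b z = z),
      (forall b1 b2, exists b, forall z, be b z = be b1 (be b2 z)) &
      (forall b, exists b', forall z, be b' (be b z) = z)].

Lemma Xt_ext (Z B : Type) (be : B -> Z -> Z) (S1 S2 : Xt be) :
  proj1_sig S1 = proj1_sig S2 -> S1 = S2.
Proof.
case: S1 => s1 p1; case: S2 => s2 p2 /= e; subst s2.
congr exist; exact: Prop_irrelevance.
Qed.

Lemma toX_rep (Z B : Type) (be : B -> Z -> Z) (S : Xt be) : S = toX be (rep S).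
Proof.
apply: Xt_ext; rewrite /rep /=; case: cid => z /= e; exact: e.
Qed.

Lemma toX_eq (Z B : Type) (be : B -> Z -> Z) (z1 z2 : Z) : good_beta be ->
  toX be z1 = toX be z2 <-> exists b, z2 = be b z1.
Proof.
move=> [[b1 hb1] hm hi]; split.
  move=> /(congr1 (@proj1_sig _ _)) /= e.
  have : Orb be z2 z2 by exists b1; rewrite hb1.
  by rewrite -e.
move=> [b e]; apply: Xt_ext => /=; apply/seteqP; split => w /= [c ->].
  have [d hd] := hi b; have [m hm'] := hm c d.
  by exists m; rewrite hm' e hd.
have [m hm'] := hm c b; by exists m; rewrite hm' e.
Qed.

Lemma actX_toX (Z A B : Type) (al : A -> Z -> Z) (be : B -> Z -> Z) a z :
  good_beta be -> (forall a b z, al a (be b z) = be b (al a z)) ->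
  actXt al be a (toX be z) = toX be (al a z).
Proof.
move=> gb comm; rewrite /actXt.
have : toX be z = toX be (rep (toX be z)) by apply: toX_rep.
move/(toX_eq _ _ gb) => [b ->].
rewrite comm; apply/(toX_eq _ _ gb).
have [_ _ hi] := gb; have [b' hb'] := hi b.
by exists b'; rewrite hb'.
Qed.

Lemma cont1 (T U : topologicalType) (u : U) : continuous (fun t : T => (t, u)).
Proof. move=> t. apply: cvg_pair. exact: cvg_id. exact: cvg_cst. Qed.
Lemma cont2 (T U : topologicalType) (u : U) : continuous (fun t : T => (u, t)).
Proof. move=> t. apply: cvg_pair. exact: cvg_cst. exact: cvg_id. Qed.

Theorem proposition5p13 : is_split autR_mul autR_one.
Proof.
move=> H mulH invH oneH [[hA hI hV _ _] _ _ _] Z act [a1 aM aO [z0 _] aT].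
have aM' : forall g h g' h' z, act (g, h) (act (g', h') z) = act (autR_mul g g', mulH h h') z.
  by move=> g h g' h' z; rewrite -aM.
have m1 : forall h, mulH oneH h = h by move=> h; case: (hI h).
have m1' : forall h, mulH h oneH = h by move=> h; case: (hI h).
pose aG := fun (g : autR) (z : Z) => act (g, oneH) z.
pose aH := fun (h : H) (z : Z) => act (autR_one, h) z.
have gbH : good_beta aH.
  split.
  - by exists oneH => z; exact: a1.
  - by move=> b1 b2; exists (mulH b1 b2) => z; rewrite /aH aM' autR_1mul.
  - by move=> b; exists (invH b) => z; rewrite /aH aM' autR_1mul (proj1 (hV b)) a1.
have gbG : good_beta aG.
  split.
  - by exists autR_one => z; exact: a1.
  - by move=> b1 b2; exists (autR_mul b1 b2) => z; rewrite /aG aM' m1.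
  - by move=> b; exists (autR_inv b) => z; rewrite /aG aM' autR_mulV m1 a1.
have commGH : forall g h z, aG g (aH h z) = aH h (aG g z).
  by move=> g h z; rewrite /aG /aH !aM' autR_mul1 autR_1mul m1 m1'.
have commHG : forall h g z, aH h (aG g z) = aG g (aH h z).
  by move=> h g z; rewrite commGH.
have split_gh : forall g h z, act (g, h) z = aH h (aG g z).
  by move=> g h z; rewrite /aH /aG aM' autR_1mul m1'.
have split_hg : forall g h z, act (g, h) z = aG g (aH h z).
  by move=> g h z; rewrite /aH /aG aM' autR_mul1 m1.
have key : forall z g0 h0, act (g0, h0) z = z -> aG g0 z = z.
  move=> z g0 h0 hz.
  pose K := [set k : autR | act (k, oneH) z = z].
  have sK : subgrp K.
    split.
    - move=> a b Ka Kb; rewrite /K /=.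
      have -> : act (autR_mul a b, oneH) z = act (a, oneH) (act (b, oneH) z) by rewrite aM' m1.
      by rewrite Kb Ka.
    - move=> a Ka; rewrite /K /=.
      transitivity (act (autR_inv a, oneH) (act (a, oneH) z)); first by rewrite Ka.
      by rewrite aM' autR_mulV m1 a1.
  have oK : open K.
    exact: (@open_comp _ _ (fun k : autR => (k, oneH)) [set p | act p z = z]
              (fun k _ => @cont1 autR H oneH k) (aO z)).
  have oK' : autR_open K := oK.
  have [F fF hF] := oK' autR_one (a1 z).
  have [s es] := (finite_seqP F).1 fF.
  have hs : pstabL s `<=` K.
    move=> k hk; have := hF k; rewrite autR_1mul; apply; rewrite es; exact: hk.
  apply: (key_lemma sK hs) => k Kk.
  have Kk' : act (k, oneH) z = z := Kk.
  have w1 : act (autR_inv g0, invH h0) z = z.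
    transitivity (act (autR_inv g0, invH h0) (act (g0, h0) z)); first by rewrite hz.
    by rewrite aM' autR_mulV (proj1 (hV h0)) a1.
  rewrite /K /=.
  transitivity (act (g0, h0) (act (k, oneH) (act (autR_inv g0, invH h0) z))).
    by rewrite !aM' m1' (proj2 (hV h0)) autR_mulA.
  by rewrite w1 Kk' hz.
have AX : forall g z, actXt aG aH g (toX aH z) = toX aH (aG g z).
  by move=> g z; apply: actX_toX.
have AY : forall h z, actXt aH aG h (toX aG z) = toX aG (aH h z).
  by move=> h z; apply: actX_toX.
exists (Xt aH), (actXt aG aH), (Xt aG), (actXt aH aG); split.
- split.
  + move=> S; rewrite (toX_rep S) AX; congr toX; exact: a1.
  + move=> a b S; rewrite (toX_rep S) !AX; congr toX; by rewrite /aG aM' m1.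
  + move=> S; rewrite (toX_rep S); set z := rep S.
    have -> : [set k | actXt aG aH k (toX aH z) = toX aH z] =
        \bigcup_(h in setT) ((fun k : autR => (k, h)) @^-1` [set p | act p z = z]).
      apply/seteqP; split => k /=.
        rewrite AX => /(toX_eq _ _ gbH) [b e]; exists b => //=.
        by rewrite split_gh -e.
      move=> [b _ hb]; rewrite AX; apply/(toX_eq _ _ gbH); exists b.
      by rewrite -split_gh hb.
    apply: bigcup_open => h _; apply: open_comp; last exact: aO.
    by move=> k _; exact: cont1.
  + by exists (toX aH z0).
  + move=> S1 S2; rewrite (toX_rep S1) (toX_rep S2).
    have [[g h] e] := aT (rep S1) (rep S2).
    exists g; rewrite AX; apply/(toX_eq _ _ gbH); exists h; by rewrite -split_gh e.
- split.
  + move=> S; rewrite (toX_rep S) AY; congr toX; exact: a1.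
  + move=> a b S; rewrite (toX_rep S) !AY; congr toX; by rewrite /aH aM' autR_1mul.
  + move=> S; rewrite (toX_rep S); set z := rep S.
    have -> : [set k | actXt aH aG k (toX aG z) = toX aG z] =
        \bigcup_(g in setT) ((fun k : H => (g, k)) @^-1` [set p | act p z = z]).
      apply/seteqP; split => k /=.
        rewrite AY => /(toX_eq _ _ gbG) [b e]; exists b => //=.
        by rewrite split_hg -e.
      move=> [b _ hb]; rewrite AY; apply/(toX_eq _ _ gbG); exists b.
      by rewrite -split_hg hb.
    apply: bigcup_open => g _; apply: open_comp; last exact: aO.
    by move=> k _; exact: cont2.
  + by exists (toX aG z0).
  + move=> S1 S2; rewrite (toX_rep S1) (toX_rep S2).
    have [[g h] e] := aT (rep S1) (rep S2).
    exists h; rewrite AY; apply/(toX_eq _ _ gbG); exists g; by rewrite -split_hg e.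
have inj : forall z z', toX aH z = toX aH z' -> toX aG z = toX aG z' -> z = z'.
  move=> z z' /(toX_eq _ _ gbH) [h e1] /(toX_eq _ _ gbG) [g e2].
  have hz : act (autR_inv g, h) z = z.
    rewrite split_hg -e1 e2 /aG aM' autR_mulV m1 a1 //.
  have kz := key z (autR_inv g) h hz.
  rewrite e2 -{2}kz /aG aM' autR_mulVr m1 a1 //.
have surj : forall S1 S2, exists z, toX aH z = S1 /\ toX aG z = S2.
  move=> S1 S2; rewrite (toX_rep S1) (toX_rep S2).
  have [[g h] e] := aT (rep S1) (rep S2).
  exists (aH h (rep S1)); split.
    apply/(toX_eq _ _ gbH); exists (invH h).
    by rewrite /aH aM' autR_1mul (proj1 (hV h)) a1.
  apply/(toX_eq _ _ gbG); exists g; by rewrite -split_hg e.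
exists (fun z => (toX aH z, toX aG z)); split.
  exists (fun p => proj1_sig (cid (surj p.1 p.2))).
    move=> z /=; case: cid => z' [e1 e2] /=; exact: inj e1 e2.
  by move=> [S1 S2] /=; case: cid => z [e1 e2] /=; rewrite e1 e2.
move=> g h z /=; rewrite AX AY; congr pair.
  rewrite split_gh; symmetry; apply/(toX_eq _ _ gbH); by exists h.
rewrite split_hg; symmetry; apply/(toX_eq _ _ gbG); by exists g.
Qed.
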